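(* For every partition $\mu$ of $n$, the $\mathbb{Q}$-linear extension $\Phi: M^\mu\to \operatorname{span}_{\mathbb{Q}}\mathcal{A}(\mu)$ is an isomorphism of graded vector spaces; equivalently, $\Phi$ restricts to a degree-preserving bijection from the set of row-strict fillings of $\mu$ onto $\mathcal{A}(\mu)$.
   Context: A row-strict filling of a partition $\mu$ of $n$ (Young diagram, left-justified rows, rows top to bottom) places $1,\dots,n$ bijectively in its boxes, increasing left to right along rows. Dimension pairs (with $h(j)=j$): $(a,b)$ is a dimension pair of $T$ if $b>a$; $b$ lies in the same column as $a$ strictly below it or in a column strictly left of $a$'s; and if the box immediately right of $a$ exists and contains $c$, then $b\le c$. $D^T_j$ is the set of dimension pairs $(a,j)$; $\Phi(T)=\prod_{j=2}^n x_j^{|D^T_j|}$; $\mathcal{A}(\mu)$ is the set of all $\Phi(T)$. $M^\mu$ is the formal $\mathbb{Q}$-span of the row-strict fillings of $\mu$, graded by number of dimension pairs; $\operatorname{span}\mathcal{A}(\mu)$ is graded by polynomial degree. *)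

(* Defs.v *)
From mathcomp Require Import all_boot.
Set Implicit Arguments. Unset Strict Implicit. Unset Printing Implicit Defensive.

Definition is_partition (n : nat) (mu : seq nat) : bool :=
  [&& sorted geq mu, all (fun k => 0 < k) mu & sumn mu == n].

(* A filling of a Young diagram is a list of rows (top to bottom), each row a
   list of entries read left to right; row r, column c holds [entry T r c]. *)
Definition entry (T : seq (seq nat)) (r c : nat) : nat := nth 0 (nth [::] T r) c.

Definition is_box (T : seq (seq nat)) (r c : nat) : bool :=
  (r < size T) && (c < size (nth [::] T r)).

Definition boxes (T : seq (seq nat)) : seq (nat * nat) :=
  flatten [seq [seq (r, c) | c <- iota 0 (size (nth [::] T r))] | r <- iota 0 (size T)].

Definition row_strict (n : nat) (mu : seq nat) (T : seq (seq nat)) : bool :=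
  [&& shape T == mu, perm_eq (flatten T) (iota 1 n) & all (sorted ltn) T].

Definition dim_pair_at (T : seq (seq nat)) (ra ca rb cb : nat) : bool :=
  [&& entry T ra ca < entry T rb cb,
      ((cb == ca) && (ra < rb)) || (cb < ca)
    & is_box T ra ca.+1 ==> (entry T rb cb <= entry T ra ca.+1)].

Definition dim_pair (T : seq (seq nat)) (a b : nat) : bool :=
  has (fun p => has (fun q =>
         [&& entry T p.1 p.2 == a, entry T q.1 q.2 == b
           & dim_pair_at T p.1 p.2 q.1 q.2]) (boxes T)) (boxes T).

Definition D_card (n : nat) (T : seq (seq nat)) (j : nat) : nat :=
  count (fun a => dim_pair T a j) (iota 1 n).

(* Phi(T) = prod_{j=2}^n x_j^{|D^T_j|}, represented by its exponent vector
   [:: |D_2|; ...; |D_n|] (monomials in x_2..x_n are equal iff their exponent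
   vectors are equal). *)
Definition Phi (n : nat) (T : seq (seq nat)) : seq nat :=
  [seq D_card n T j | j <- iota 2 n.-1].

Definition mono_deg (m : seq nat) : nat := sumn m.

(* Total number of dimension pairs of T (the grading on M^mu). *)
Definition num_dim_pairs (n : nat) (T : seq (seq nat)) : nat :=
  \sum_(a <- iota 1 n) \sum_(b <- iota 1 n) dim_pair T a b.

Definition in_A (n : nat) (mu : seq nat) (m : seq nat) : Prop :=
  exists T, row_strict n mu T /\ Phi n T = m.

(* Main.v *)
Require Import Defs.
From mathcomp Require Import all_boot.
Set Implicit Arguments. Unset Strict Implicit. Unset Printing Implicit Defensive.

Lemma count_le_split (j : nat) (w : seq nat) :
  count (fun x => x <= j) w = count (fun x => x < j) w + count_mem j w.
Proof.
elim: w => //= x w ->; rewrite addnACA; congr (_ + _).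
by case: ltngtP.
Qed.

Lemma sorted_prefix (j : nat) (w : seq nat) : sorted ltn w ->
  forall c, c < size w -> (nth 0 w c < j) = (c < count (fun x => x < j) w).
Proof.
elim: w => //= x w IH Hs c.
have Hw : sorted ltn w := path_sorted Hs.
have Hall : all (fun y => x < y) w by exact: (order_path_min ltn_trans Hs).
have H0 : ~~ (x < j) -> count (fun x => x < j) w = 0.
  move=> Hx; rewrite -leqNgt in Hx.
  rewrite (@eq_in_count _ _ pred0) ?count_pred0 // => y /(allP Hall) Hy /=.
  by apply/negbTE; rewrite -leqNgt; apply: leq_trans Hx (ltnW Hy).
case: c => [|c] /= Hc.
  by case: (ltnP x j) => Hx //=; rewrite H0 // -leqNgt.
rewrite IH //; case: (ltnP x j) => Hx //=.
by rewrite H0 // -leqNgt.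
Qed.

Lemma index_count (j : nat) (w : seq nat) : sorted ltn w -> j \in w ->
  index j w = count (fun x => x < j) w.
Proof.
move=> Hs Hj.
have Hk : index j w < size w by rewrite index_mem.
have := sorted_prefix j Hs Hk; rewrite nth_index // ltnn => /esym/negbT.
rewrite -leqNgt => Hmk; apply/eqP; rewrite eqn_leq Hmk andbT leqNgt.
apply/negP => Hlt.
have Hm : count (fun x => x < j) w < size w by apply: ltn_trans Hlt Hk.
have := sorted_prefix j Hs Hm; rewrite ltnn.
have := sorted_ltn_nth ltn_trans 0 Hs _ _ Hm Hk Hlt; rewrite nth_index // => ->.
by [].
Qed.

Lemma uniq_rows (T : seq (seq nat)) r r' x : uniq (flatten T) ->
  r < size T -> r' < size T -> x \in nth [::] T r -> x \in nth [::] T r' -> r = r'.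
Proof.
move=> Hu.
wlog Hlt : r r' / r < r'.
  move=> W Hr Hr' H1 H2; case: (ltngtP r r') => h.
  - exact: W.
  - by apply/esym; apply: W.
  - by [].
move=> Hr Hr' H1 H2; exfalso.
move: Hu; rewrite -(cat_take_drop r' T) flatten_cat cat_uniq => /and3P[_ /hasP Hn _].
apply: Hn; exists x.
  apply/flattenP; exists (nth [::] (drop r' T) 0).
    by apply: mem_nth; rewrite size_drop subn_gt0.
  by rewrite nth_drop addn0.
apply/flattenP; exists (nth [::] (take r' T) r).
  by apply: mem_nth; rewrite size_take; case: ifP.
by rewrite nth_take.
Qed.

Lemma mem_boxes (T : seq (seq nat)) r c : ((r, c) \in boxes T) = is_box T r c.
Proof.
apply/flatten_mapP/andP.
  by case=> r0; rewrite mem_iota /= => Hr /mapP[c0]; rewrite mem_iota /= => Hc [-> ->].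
case=> Hr Hc; exists r; first by rewrite mem_iota.
by apply/mapP; exists c; rewrite // mem_iota.
Qed.

Lemma first_part (c m s : nat) : c < s -> m <= s ->
  (c < m) && ((c.+1 < s) ==> ~~ (c.+1 < m)) = (c.+1 == m).
Proof.
move=> Hc Hm; case: (ltnP c m) => h /=; last by rewrite gtn_eqF // ltnS.
case: (eqVneq c.+1 m) => [<-|N]; first by rewrite ltnn implybT.
have h2 : c.+1 < m by rewrite ltn_neqAle N h.
by rewrite h2 (leq_trans h2 Hm).
Qed.

Lemma arith_ne (c m cj r rj : nat) : c.+1 = m ->
  ((cj == c) && (r < rj)) || (cj < c) =
  ((cj + 1 < m + 0) || ((m + 0 == cj + 1) && (r < rj))).
Proof.
move=> <-; rewrite addn0 addn1 ltnS eqSS orbC; congr (_ || _).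
by rewrite eq_sym.
Qed.

Lemma arith_eq (c m rj : nat) :
  ((m == c) && (rj < rj)) || (m < c) -> c.+1 = m -> False.
Proof.
by rewrite ltnn andbF /= => h E; move: h; rewrite -E ltnNge leqnSn.
Qed.

Definition L (j : nat) (T : seq (seq nat)) := [seq count (fun x => x <= j) w | w <- T].
Definition rowof (T : seq (seq nat)) (j : nat) := find (fun w => j \in w) T.
Definition prec (l : seq nat) r s :=
  (nth 0 l s < nth 0 l r) || ((nth 0 l r == nth 0 l s) && (r < s)).
Definition F (l : seq nat) s := count (fun r => prec l r s) (iota 0 (size l)).

Lemma sumn_count (A : eqType) (f : A -> nat) (P : pred A) (s : seq A) :
  (forall x, x \in s -> f x = P x) -> sumn (map f s) = count P s.
Proof.
elim: s => //= x s IH H; rewrite H ?mem_head // IH // => y Hy.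
by apply: H; rewrite inE Hy orbT.
Qed.

Lemma row_sorted (T : seq (seq nat)) r : all (sorted ltn) T -> sorted ltn (nth [::] T r).
Proof.
move=> H; case: (ltnP r (size T)) => h; last by rewrite nth_default.
by apply: (allP H); apply: mem_nth.
Qed.

Lemma box_unique (T : seq (seq nat)) r c r' c' : uniq (flatten T) -> all (sorted ltn) T ->
  is_box T r c -> is_box T r' c' -> entry T r c = entry T r' c' -> r = r' /\ c = c'.
Proof.
move=> Hu Hs /andP[Hr Hc] /andP[Hr' Hc'] E.
have Er : r = r'.
  apply: (uniq_rows Hu Hr Hr' (x := entry T r c)); first exact: mem_nth.
  by rewrite E; apply: mem_nth.
subst r'; split=> //; apply/eqP.
rewrite -(nth_uniq 0 Hc Hc') ?(sorted_uniq ltn_trans ltnn) ?row_sorted //.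
by apply/eqP.
Qed.

Lemma dim_pair_char (T : seq (seq nat)) r c rj cj j : uniq (flatten T) -> all (sorted ltn) T ->
  is_box T rj cj -> entry T rj cj = j -> is_box T r c ->
  dim_pair T (entry T r c) j = dim_pair_at T r c rj cj.
Proof.
move=> Hu Hs Hbj Hej Hb; apply/idP/idP.
  case/hasP=> [[pr pc] Hp] /hasP[[qr qc] Hq] /and3P[/eqP E1 /eqP E2 H].
  rewrite mem_boxes in Hp; rewrite mem_boxes in Hq.
  have [E3 E4] := box_unique Hu Hs Hp Hb E1.
  have [E5 E6] : qr = rj /\ qc = cj by apply: box_unique Hu Hs Hq Hbj _; rewrite E2.
  by subst.
move=> H; apply/hasP; exists (r, c); first by rewrite mem_boxes.
apply/hasP; exists (rj, cj); first by rewrite mem_boxes.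
by rewrite /= eqxx Hej eqxx.
Qed.

Lemma key n mu T j : row_strict n mu T -> 0 < j <= n ->
  D_card n T j = F (L j T) (rowof T j).
Proof.
case/and3P=> [/eqP Hsh Hperm Hsort] Hjn.
have Hu : uniq (flatten T) by rewrite (perm_uniq Hperm) iota_uniq.
have HjT : j \in flatten T by rewrite (perm_mem Hperm) mem_iota add1n ltnS.
have Hhas : has (fun w => j \in w) T.
  by apply/hasP; case/flattenP: HjT => w Hw Hjw; exists w.
have Hrj : rowof T j < size T by rewrite /rowof -has_find.
have Hjw : j \in nth [::] T (rowof T j) by apply: (nth_find [::] Hhas).
have Hbox : is_box T (rowof T j) (index j (nth [::] T (rowof T j))).
  by rewrite /is_box Hrj index_mem.
have Hent : entry T (rowof T j) (index j (nth [::] T (rowof T j))) = j.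
  by rewrite /entry nth_index.
have Hcj := index_count (row_sorted (rowof T j) Hsort) Hjw.
have Hcm : forall r, r < size T -> count_mem j (nth [::] T r) = (r == rowof T j).
  move=> r Hr; case: eqP => [->|Hne].
    by rewrite count_uniq_mem ?Hjw // (sorted_uniq ltn_trans ltnn) ?row_sorted.
  apply/count_memPn/negP => Hjr; apply: Hne; exact: uniq_rows Hu Hr Hrj Hjr Hjw.
have HL : forall r, r < size T ->
    nth 0 (L j T) r = count (fun x => x < j) (nth [::] T r) + (r == rowof T j).
  by move=> r Hr; rewrite (nth_map [::]) // count_le_split Hcm.
rewrite /D_card; move/permP: Hperm => Hcnt; rewrite -Hcnt count_flatten /F size_map.
rewrite -{2}(take_size T) -(map_nth_iota0 [::] (leqnn (size T))) -map_comp.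
apply: sumn_count => r; rewrite mem_iota /= => Hr.
have Hws := row_sorted r Hsort.
rewrite -{1}(take_size (nth [::] T r)) -(map_nth_iota0 0 (leqnn _)) count_map.
have Claim : forall c, c < size (nth [::] T r) ->
    dim_pair T (nth 0 (nth [::] T r) c) j =
    (c.+1 == count (fun x => x < j) (nth [::] T r)) && prec (L j T) r (rowof T j).
  move=> c Hc.
  have Hbrc : is_box T r c by rewrite /is_box Hr.
  change (nth 0 (nth [::] T r) c) with (entry T r c).
  rewrite (dim_pair_char Hu Hsort Hbox Hent Hbrc) /dim_pair_at Hent.
  have HC : (is_box T r c.+1 ==> (j <= entry T r c.+1)) =
      ((c.+1 < size (nth [::] T r)) ==> ~~ (c.+1 < count (fun x => x < j) (nth [::] T r))).
    rewrite /is_box Hr /=; case: ltnP => //= h.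
    by rewrite /entry leqNgt sorted_prefix.
  rewrite HC /entry sorted_prefix // andbCA andbC.
  rewrite (first_part Hc (count_size _ _)).
  case E: (_ == _) => //=; move/eqP: E => E.
  rewrite /prec (HL r Hr) (HL _ Hrj) eqxx -Hcj.
  case: (eqVneq r (rowof T j)) => [Erj | Nrj].
    subst r; rewrite -Hcj !ltnn !andbF /=.
    by rewrite Hcj -E ltnNge leqnSn.
  exact: arith_ne.
rewrite (eq_in_count (a2 := fun c => (c.+1 == count (fun x => x < j) (nth [::] T r))
   && prec (L j T) r (rowof T j))); last first.
  by move=> c; rewrite mem_iota => /andP[_ Hc]; exact: Claim.
case Hp: (prec _ _ _); last first.
  by rewrite (eq_count (a2 := pred0)) ?count_pred0 // => c /=; rewrite andbF.
have Hm0 : 0 < count (fun x => x < j) (nth [::] T r).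
  move: Hp; rewrite /prec (HL r Hr) (HL _ Hrj) eqxx; case: eqVneq => [->|_].
    by rewrite !ltnn andbF.
  rewrite addn0 => /orP[h|/andP[/eqP-> _]]; last by rewrite addn1.
  exact: leq_ltn_trans (leq0n _) h.
move: Hm0 (count_size (fun x => x < j) (nth [::] T r)).
case: (count (fun x => x < j) (nth [::] T r)) => // m' _ Hm'.
rewrite (eq_count (a2 := pred1 m')) ?count_uniq_mem ?iota_uniq ?mem_iota ?add0n ?Hm' //.
by move=> c; rewrite /= andbT eqSS.
Qed.

Lemma count_lt (A : eqType) (P Q : pred A) s y : (forall x, P x -> Q x) ->
  y \in s -> Q y -> ~~ P y -> count P s < count Q s.
Proof.
move=> PQ; elim: s => //= x s IH; rewrite inE => /orP[/eqP<-|Hy] HQ HP.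
  by rewrite (negbTE HP) HQ add0n add1n ltnS; apply: sub_count.
rewrite -addnS; apply: leq_add; last exact: IH.
by case Px: (P x); rewrite ?(PQ _ Px).
Qed.

Lemma prec_nat (xa xb xc a b c : nat) :
  ((xb < xa) || ((xa == xb) && (a < b))) -> ((xc < xb) || ((xb == xc) && (b < c))) ->
  (xc < xa) || ((xa == xc) && (a < c)).
Proof.
case/orP => [h1|/andP[/eqP e1 h1]]; case/orP => [h2|/andP[/eqP e2 h2]]; subst.
- by rewrite (ltn_trans h2 h1).
- by rewrite h1.
- by rewrite h2.
- by rewrite eqxx (ltn_trans h1 h2) orbT.
Qed.

Lemma prec_trans l a b c : prec l a b -> prec l b c -> prec l a c.
Proof. exact: prec_nat. Qed.

Lemma prec_irr l r : prec l r r = false.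
Proof. by rewrite /prec !ltnn andbF. Qed.

Lemma prec_total l r s : r != s -> prec l r s || prec l s r.
Proof.
rewrite /prec => Hne; case: (ltngtP (nth 0 l r) (nth 0 l s)) => h //=.
by case: ltngtP Hne => // ->; rewrite eqxx.
Qed.

Lemma F_lt l r s : r < size l -> prec l r s -> F l r < F l s.
Proof.
move=> Hr h; apply: (count_lt (y := r)).
- by move=> x hx; apply: prec_trans hx h.
- by rewrite mem_iota.
- exact: h.
- by rewrite prec_irr.
Qed.

Lemma F_inj l r s : r < size l -> s < size l -> F l r = F l s -> r = s.
Proof.
move=> Hr Hs E; case: (eqVneq r s) => // Hne; exfalso.
case/orP: (prec_total l Hne) => h.
  by have := F_lt Hr h; rewrite E ltnn.
by have := F_lt Hs h; rewrite E ltnn.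
Qed.

Lemma mem_row_range n mu T r x : row_strict n mu T -> x \in nth [::] T r -> 0 < x <= n.
Proof.
case/and3P=> [_ Hperm _] Hx.
case: (ltnP r (size T)) => Hr; last by move: Hx; rewrite nth_default.
have : x \in flatten T by apply/flattenP; exists (nth [::] T r) => //; apply: mem_nth.
by rewrite (perm_mem Hperm) mem_iota add1n ltnS.
Qed.

Lemma count_mem_row n mu T j r : row_strict n mu T -> 0 < j <= n -> r < size T ->
  count_mem j (nth [::] T r) = (r == rowof T j).
Proof.
case/and3P=> [/eqP Hsh Hperm Hsort] Hjn Hr.
have Hu : uniq (flatten T) by rewrite (perm_uniq Hperm) iota_uniq.
have HjT : j \in flatten T by rewrite (perm_mem Hperm) mem_iota add1n ltnS.
have Hhas : has (fun w => j \in w) T.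
  by apply/hasP; case/flattenP: HjT => w Hw Hjw; exists w.
have Hrj : rowof T j < size T by rewrite /rowof -has_find.
have Hjw : j \in nth [::] T (rowof T j) by apply: (nth_find [::] Hhas).
case: eqP => [->|Hne].
  by rewrite count_uniq_mem ?Hjw // (sorted_uniq ltn_trans ltnn) ?row_sorted.
apply/count_memPn/negP => Hjr; apply: Hne; exact: uniq_rows Hu Hr Hrj Hjr Hjw.
Qed.

Lemma rowof_lt n mu T j : row_strict n mu T -> 0 < j <= n -> rowof T j < size T.
Proof.
case/and3P=> [/eqP Hsh Hperm Hsort] Hjn.
have HjT : j \in flatten T by rewrite (perm_mem Hperm) mem_iota add1n ltnS.
rewrite /rowof -has_find.
by apply/hasP; case/flattenP: HjT => w Hw Hjw; exists w.
Qed.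

Lemma count_pred_lt (j : nat) w : 0 < j -> count (fun x => x <= j.-1) w = count (fun x => x < j) w.
Proof. by case: j. Qed.

Lemma L_step n mu T j r : row_strict n mu T -> 0 < j <= n -> r < size T ->
  nth 0 (L j.-1 T) r = nth 0 (L j T) r - (r == rowof T j).
Proof.
move=> HT Hj Hr; rewrite !(nth_map [::]) // (count_le_split j) (count_mem_row HT Hj Hr).
by rewrite addnK count_pred_lt //; case/andP: Hj.
Qed.

Lemma D1_zero n T : D_card n T 1 = 0.
Proof.
rewrite /D_card (eq_in_count (a2 := pred0)) ?count_pred0 // => a.
rewrite mem_iota => /andP[Ha _] /=; apply/negbTE/negP.
case/hasP=> p _ /hasP[q _ /and3P[/eqP E1 /eqP E2 /and3P[H _ _]]].
by move: H; rewrite E1 E2 ltnNge Ha.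
Qed.

Lemma sum_count (P : pred nat) s : \sum_(a <- s) (P a : nat) = count P s.
Proof. by elim: s => [|x s IH]; rewrite ?big_nil ?big_cons ?IH. Qed.

Lemma degree n T : mono_deg (Phi n T) = num_dim_pairs n T.
Proof.
rewrite /mono_deg /Phi /num_dim_pairs exchange_big sumnE big_map /=.
case: n => [|n]; first by rewrite !big_nil.
rewrite [in RHS]/= big_cons.
have -> : \sum_(i <- iota 1 n.+1) dim_pair T i 1 = D_card n.+1 T 1.
  exact: (sum_count (fun i => dim_pair T i 1)).
rewrite D1_zero add0n /=; apply: eq_bigr => j _.
exact: esym (sum_count (fun i => dim_pair T i j) _).
Qed.

Lemma inj n mu T1 T2 : row_strict n mu T1 -> row_strict n mu T2 ->
  Phi n T1 = Phi n T2 -> T1 = T2.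
Proof.
move=> H1 H2 HP.
have Hsz : size T1 = size T2.
  case/and3P: (H1) => /eqP S1 _ _; case/and3P: (H2) => /eqP S2 _ _.
  have E : shape T1 = shape T2 by rewrite S1 S2.
  by move: (congr1 size E); rewrite /shape !size_map.
have HD : forall j, 0 < j <= n -> D_card n T1 j = D_card n T2 j.
  move=> j /andP[Hj0 Hjn]; case: j Hj0 Hjn => // -[|j] _ Hjn; first by rewrite !D1_zero.
  have n0 : 0 < n by apply: leq_trans Hjn.
  have Hj : j < n.-1 by rewrite -ltnS prednK.
  have := congr1 (nth 0) HP; move/(congr1 (fun f => f j)).
  by rewrite /Phi !(nth_map 0) ?size_iota ?nth_iota.
have HL : forall k, k <= n -> L (n - k) T1 = L (n - k) T2.
  elim=> [|k IH] Hk.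
    rewrite subn0.
    have Ln : forall T, row_strict n mu T -> L n T = mu.
      move=> T HT; have HT' := HT; case/and3P: HT' => /eqP S _ _.
      rewrite -S /L /shape; apply/eq_in_map => w Hw.
      rewrite -count_predT; apply: eq_in_count => x Hx /=.
      have := mem_row_range (r := index w T) HT; rewrite nth_index // => /(_ x Hx).
      by case/andP.
    by rewrite !Ln.
  have IH' := IH (ltnW Hk).
  have Hj : 0 < n - k <= n by rewrite subn_gt0 Hk leq_subr.
  rewrite subnS.
  have Hr : rowof T1 (n - k) = rowof T2 (n - k).
    apply: (F_inj (l := L (n - k) T1)).
    - by rewrite size_map (rowof_lt H1 Hj).
    - by rewrite size_map Hsz (rowof_lt H2 Hj).
    rewrite -(key H1 Hj) IH' -(key H2 Hj); exact: HD.
  apply: (eq_from_nth (x0 := 0)); first by rewrite !size_map Hsz.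
  move=> r; rewrite size_map => Hr1.
  by rewrite (L_step H1 Hj Hr1) (L_step H2 Hj) -?Hsz // IH' Hr.
apply: (eq_from_nth (x0 := [::])) => // r Hr.
have Hs1 : all (sorted ltn) T1 by case/and3P: H1.
have Hs2 : all (sorted ltn) T2 by case/and3P: H2.
apply: (irr_sorted_eq ltn_trans ltnn); rewrite ?row_sorted //.
move=> x; case Hx: (0 < x <= n); last first.
  by apply/idP/idP => h; [rewrite (mem_row_range H1 h) in Hx | rewrite (mem_row_range H2 h) in Hx].
case/andP: (Hx) => Hx0 Hxn.
have Hk1 := HL (n - x) (leq_subr _ _); rewrite subKn // in Hk1.
have Hk2 : L (n - (n - x).+1) T1 = L (n - (n - x).+1) T2.
  apply: HL; rewrite ltn_subrL Hx0; exact: leq_trans Hxn.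
rewrite subnS subKn // in Hk2.
have := congr1 (fun l => nth 0 l r) Hk1; rewrite /= !(nth_map [::]) -?Hsz // !(count_le_split x).
have := congr1 (fun l => nth 0 l r) Hk2; rewrite /= !(nth_map [::]) -?Hsz // !count_pred_lt //.
move=> -> /addnI Ecm.
by rewrite -!has_pred1 !has_count Ecm.
Qed.

Theorem mainTheorem9 (n : nat) (mu : seq nat) (Hmu : is_partition n mu) :
  (forall T, row_strict n mu T -> in_A n mu (Phi n T)) /\
  (forall m, in_A n mu m -> exists T, row_strict n mu T /\ Phi n T = m) /\
  (forall T1 T2, row_strict n mu T1 -> row_strict n mu T2 ->
     Phi n T1 = Phi n T2 -> T1 = T2) /\
  (forall T, row_strict n mu T -> mono_deg (Phi n T) = num_dim_pairs n T).
Proof.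
split; first by move=> T HT; exists T.
split; first by move=> m [T [HT <-]]; exists T.
split; first exact: inj.
by move=> T _; exact: degree.
Qed.
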